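(* Consider the model below with $M=M_f=N=1$ and $\epsilon_2\ge0$, and let $\bar{\epsilon}_{RPE}\in[-\infty,\infty)$ be the number such that a restricted perceptions equilibrium (RPE) exists if and only if $\epsilon_1\ge\bar{\epsilon}_{RPE}$. If $\epsilon_1>\bar{\epsilon}_{RPE}$, then (i) there is exactly one E-stable RPE, and (ii) it is of type PP or of type ZP.
   Context: Parameters: $0<\beta<1$, $\sigma,\lambda,\mu>0$, $\psi>1$, $p,q\in(0,1]$ with $(p,q)\neq(1,1)$. The shock $\epsilon_t$ is a two-state Markov chain on $\{\epsilon_1,\epsilon_2\}$ with $\Pr(\epsilon_{t+1}=\epsilon_1\mid\epsilon_t=\epsilon_1)=p$, $\Pr(\epsilon_{t+1}=\epsilon_2\mid\epsilon_t=\epsilon_2)=q$; $\bar q:=(1-p)/(2-p-q)$. Model: $x_t=\hat E_t x_{t+1}-\sigma(i_t-\hat E_t\pi_{t+1})+\epsilon_t$, $\pi_t=\lambda x_t+\beta\hat E_t\pi_{t+1}$, $i_t=\max\{\psi\pi_t,-\mu\}$. An RPE is a pair $Y_j=(x_j,\pi_j)$, $j=1,2$, such that with $\bar Y=(\bar x,\bar\pi):=\bar qY_2+(1-\bar q)Y_1$ and $i_j=\max\{\psi\pi_j,-\mu\}$: $x_j=\bar x-\sigma(i_j-\bar\pi)+\epsilon_j$, $\pi_j=\lambda x_j+\beta\bar\pi$ for $j=1,2$. Types: the ZLB binds in state $j$ if $\psi\pi_j\le-\mu$; type PP (binds in no state), ZP (state 1 only), PZ (state 2 only), ZZ (both). Let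 $A_P=\frac{1}{1+\lambda\sigma\psi}\begin{pmatrix}1&\sigma-\beta\sigma\psi\\ \lambda&\beta+\lambda\sigma\end{pmatrix}$, $A_Z=\begin{pmatrix}1&\sigma\\ \lambda&\beta+\lambda\sigma\end{pmatrix}$, $I$ the $2\times2$ identity, and $DT^{PP}=A_P-I$, $DT^{ZP}=\bar qA_P+(1-\bar q)A_Z-I$, $DT^{PZ}=(1-\bar q)A_P+\bar qA_Z-I$, $DT^{ZZ}=A_Z-I$. An RPE of type $i$ is E-stable if all eigenvalues of $DT^i$ have negative real parts. *)

(* Defs.v *)
From HB Require Import structures.
From mathcomp Require Import all_boot all_order all_algebra.
From mathcomp Require Import reals.
From mathcomp.real_closed Require Import complex.
Set Implicit Arguments. Unset Strict Implicit. Unset Printing Implicit Defensive.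
Import Order.TTheory GRing.Theory Num.Theory.
Local Open Scope ring_scope.

Section Model.
Variable R : realType.

Record params := Params {
  beta : R; sigma : R; lambda : R; mu : R; psi : R; p : R; q : R }.

Definition admissible (P : params) : Prop :=
  [/\ 0 < beta P < 1, 0 < sigma P, 0 < lambda P, 0 < mu P & 1 < psi P] /\
  [/\ 0 < p P <= 1, 0 < q P <= 1 & ~ (p P = 1 /\ q P = 1)].

Definition qbar (P : params) : R := (1 - p P) / (2 - p P - q P).

Definition rate (P : params) (pi : R) : R := Num.max (psi P * pi) (- mu P).

Definition is_RPE (P : params) (eps1 eps2 x1 pi1 x2 pi2 : R) : Prop :=
  let xb := qbar P * x2 + (1 - qbar P) * x1 in
  let pib := qbar P * pi2 + (1 - qbar P) * pi1 in
  [/\ x1 = xb - sigma P * (rate P pi1 - pib) + eps1,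
      pi1 = lambda P * x1 + beta P * pib,
      x2 = xb - sigma P * (rate P pi2 - pib) + eps2 &
      pi2 = lambda P * x2 + beta P * pib].

Inductive rpe_type := PP | ZP | PZ | ZZ.

Definition binds (P : params) (pi : R) : bool := psi P * pi <= - mu P.

Definition type_of (P : params) (pi1 pi2 : R) : rpe_type :=
  match binds P pi1, binds P pi2 with
  | false, false => PP
  | true, false => ZP
  | false, true => PZ
  | true, true => ZZ
  end.

Definition A_P (P : params) : 'M[R]_2 :=
  (1 + lambda P * sigma P * psi P)^-1 *:
  \matrix_(i < 2, j < 2)
     (if i == 0 :> nat then (if j == 0 :> nat then 1 else sigma P - beta P * sigma P * psi P)
      else (if j == 0 :> nat then lambda P else beta P + lambda P * sigma P)).

Definition A_Z (P : params) : 'M[R]_2 :=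
  \matrix_(i < 2, j < 2)
     (if i == 0 :> nat then (if j == 0 :> nat then 1 else sigma P)
      else (if j == 0 :> nat then lambda P else beta P + lambda P * sigma P)).

Definition DT (P : params) (t : rpe_type) : 'M[R]_2 :=
  match t with
  | PP => A_P P - 1%:M
  | ZP => qbar P *: A_P P + (1 - qbar P) *: A_Z P - 1%:M
  | PZ => (1 - qbar P) *: A_P P + qbar P *: A_Z P - 1%:M
  | ZZ => A_Z P - 1%:M
  end.

Definition all_eig_neg_re (M : 'M[R]_2) : Prop :=
  forall z : R[i], eigenvalue (map_mx (fun x : R => x%:C%C) M) z -> complex.Re z < 0.

Definition E_stable_RPE (P : params) (eps1 eps2 x1 pi1 x2 pi2 : R) : Prop :=
  is_RPE P eps1 eps2 x1 pi1 x2 pi2 /\ all_eig_neg_re (DT P (type_of P pi1 pi2)).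

(* extended threshold in [-oo, +oo): None stands for -oo *)
Definition ge_thr (thr : option R) (e : R) : bool :=
  if thr is Some t then t <= e else true.
Definition gt_thr (thr : option R) (e : R) : bool :=
  if thr is Some t then t < e else true.

End Model.

(* Main.v *)
Require Import Defs.
From HB Require Import structures.
From mathcomp Require Import all_boot all_order all_algebra.
From mathcomp Require Import reals.
From mathcomp.real_closed Require Import complex.
From mathcomp Require Import ring lra.
Import Order.TTheory GRing.Theory Num.Theory.
Local Open Scope ring_scope.
Lemma det2 (F : comNzRingType) (A : 'M[F]_2) : \det A = A 0 0 * A 1 1 - A 0 1 * A 1 0.
Proof.
rewrite (expand_det_row _ 0) !big_ord_recl big_ord0 /cofactor !det_mx11 /= !mxE /=.
rewrite /bump /= add0n expr0 expr1 mul1r addr0 mulN1r mulrN.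
have -> : lift (0:'I_2) 0 = 1 by apply: val_inj.
have -> : lift (1:'I_2) 0 = 0 by apply: val_inj.
by [].
Qed.

Lemma tr2 (F : comNzRingType) (A : 'M[F]_2) : \tr A = A 0 0 + A 1 1.
Proof.
rewrite /mxtrace !big_ord_recl big_ord0 addr0.
by have -> : lift ord0 (ord0 : 'I_1) = 1 :> 'I_2 by apply: val_inj.
Qed.

Lemma eigdet (F : fieldType) n (A : 'M[F]_n) a : eigenvalue A a = (\det (a%:M - A) == 0).
Proof.
apply/eigenvalueP/det0P=> [[v Av_av v_nz] | [v v_nz Av_av]]; exists v => //.
    by rewrite mulmxBr Av_av mul_mx_scalar subrr.
  by apply/eqP; rewrite -mul_mx_scalar eq_sym -subr_eq0 -mulmxBr Av_av.
Qed.

Lemma quad_eq (R: rcfType) (x y T D : R) : ((x +i* y)*(x +i* y) - T%:C * (x +i* y) + D%:C = (x*x - y*y - T*x + D) +i* (2*x*y - T*y))%C.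
Proof.
by apply/eqP; rewrite eq_complex /=; apply/andP; split; apply/eqP; ring.
Qed.

Lemma eig_iff (R : realType) (M : 'M[R]_2) (z : R[i]) :
  eigenvalue (map_mx (fun x : R => x%:C%C) M) z <->
  (z*z - (\tr M)%:C * z + (\det M)%:C = 0)%C.
Proof.
rewrite eigdet det2 (det2 _ M) tr2 !mxE /= rmorphB rmorphD !rmorphM /=.

set a := (M 0 0)%:C%C; set b := (M 0 1)%:C%C; set c := (M 1 0)%:C%C; set d := (M 1 1)%:C%C.
have -> : (z *+ 1 - a) * (z *+ 1 - d) - (z *+ 0 - b) * (z *+ 0 - c) = z * z - (a + d) * z + (a * d - b * c).
  by rewrite mulr1n mulr0n; ring.
by split => [/eqP|->].
Qed.

Lemma stab_suff (R : realType) (M : 'M[R]_2) :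
  \tr M < 0 -> 0 < \det M -> all_eig_neg_re M.
Proof.
move=> hT hD [x y] /eig_iff; rewrite quad_eq => -[E1 E2] /=.
set T := \tr M in hT E1 E2; set D := \det M in hD E1.
have [y00|y0] := eqVneq y 0.
  rewrite y00 in E1.
  move: E1; rewrite mulr0 subr0 => E1.
  rewrite ltNge; apply/negP => hx.
  have : 0 < x * x - T * x + D.
    have : 0 <= x * x by nra.
    have : 0 <= - T * x by nra.
    lra.
  lra.
have : y * (2 * x - T) = 0 by rewrite -E2; ring.
move/eqP; rewrite mulf_eq0 (negPf y0) /= => /eqP h.
lra.
Qed.

Lemma stab_nec (R : realType) (M : 'M[R]_2) :
  all_eig_neg_re M -> 0 < \det M.
Proof.
move=> H; rewrite ltNge; apply/negP => hD.
set T := \tr M in H; set D := \det M in hD H.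
set s := Num.sqrt (T * T - 4 * D).
have s0 : 0 <= s by apply: sqrtr_ge0.
have ss : s * s = T * T - 4 * D.
  by rewrite -expr2 sqr_sqrtr //; nra.
set r := (T + s) / 2.
have r0 : 0 <= r.
  rewrite /r; apply: divr_ge0 => //.
  rewrite leNgt; apply/negP => h.
  have : s < - T by lra.
  nra.
suff : eigenvalue (map_mx (fun x : R => x%:C%C) M) (r +i* 0)%C.
  by move/H; rewrite /= ltNge r0.
apply/eig_iff; rewrite quad_eq.
apply/eqP; rewrite eq_complex /=; apply/andP; split; apply/eqP.
  rewrite -/T -/D /r; have -> : D = (T * T - s * s) / 4 by rewrite ss; field.
  by field.
ring.
Qed.
Definition Dd {R : realType} (P : params R) := 1 + lambda P * sigma P * psi P.
Definition Kk {R : realType} (P : params R) := 1 + lambda P * sigma P.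
Definition bv {R : realType} (P : params R) e y := Kk P * y + lambda P * e.
Definition Lz {R : realType} (P : params R) (z : bool) u :=
  if z then u + lambda P * sigma P * mu P else u / Dd P.
Definition bindb {R : realType} (P : params R) u : bool := psi P * u <= - (mu P * Dd P).
Definition fz {R : realType} (P : params R) u := Lz P (bindb P u) u.
Definition ell {R : realType} (P : params R) e1 e2 (z1 z2 : bool) y :=
  qbar P * Lz P z2 (bv P e2 y) + (1 - qbar P) * Lz P z1 (bv P e1 y) - y.
Definition cz {R : realType} (P : params R) (z : bool) := if z then 1 else (Dd P)^-1.
Definition slope {R : realType} (P : params R) z1 z2 :=
  Kk P * (qbar P * cz P z2 + (1 - qbar P) * cz P z1) - 1.
Definition hh {R : realType} (P : params R) e1 e2 y :=
  ell P e1 e2 (bindb P (bv P e1 y)) (bindb P (bv P e2 y)) y.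
Definition tyf (z1 z2 : bool) := match z1, z2 with
  | false, false => PP | true, false => ZP | false, true => PZ | true, true => ZZ end.

Lemma qbar_range {R : realType} (P : params R) : admissible P -> 0 <= qbar P <= 1.
Proof.
case=> _ [/andP[p0 p1] /andP[q0 q1] npq].
have hd : 0 < 2 - p P - q P.
  have [e|ne] := eqVneq (p P) 1.
    have : q P != 1 by apply/eqP => e'; apply: npq.
    move=> qn; have : q P < 1 by rewrite lt_neqAle qn q1.
    lra.
  have : p P < 1 by rewrite lt_neqAle ne p1.
  lra.
rewrite /qbar; apply/andP; split.
  apply: divr_ge0; lra.
rewrite ler_pdivrMr //; lra.
Qed.

Lemma Dd_pos {R : realType} (P : params R) : admissible P -> 0 < Dd P.
Proof.
case=> [[/andP[b0 b1] s0 l0 m0 ps1] _]; rewrite /Dd.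
have : 0 < lambda P * sigma P * psi P by rewrite !mulr_gt0 // (lt_trans ltr01).
lra.
Qed.

Lemma ell_lin {R : realType} (P : params R) e1 e2 z1 z2 y y' : admissible P ->
  ell P e1 e2 z1 z2 y' = ell P e1 e2 z1 z2 y + slope P z1 z2 * (y' - y).
Proof.
move=> /Dd_pos D0.
have D0' : Dd P != 0 by rewrite gt_eqF.
by case: z1; case: z2; rewrite /ell /Lz /bv /slope /cz; field.
Qed.

Lemma adm_pos {R : realType} (P : params R) : admissible P ->
  [/\ 0 < lambda P * sigma P, 0 < psi P, 0 < mu P, 1 < psi P & 0 < lambda P /\ 0 < sigma P].
Proof.
case=> [[/andP[b0 b1] s0 l0 m0 ps1] _]; split => //; first by rewrite mulr_gt0.
exact: lt_trans ltr01 ps1.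
Qed.

Lemma f_le {R : realType} (P : params R) u z : admissible P -> fz P u <= Lz P z u.
Proof.
move=> A; have D0 := Dd_pos P A; have [ls ps m _ _] := adm_pos P A.
rewrite /fz; case hb: (bindb P u); case: z; rewrite /Lz //.
  rewrite ler_pdivlMr //.
  have e : (u + lambda P * sigma P * mu P) * Dd P - u =
     lambda P * sigma P * (psi P * u + mu P * Dd P) by rewrite /Dd; ring.
  move: hb; rewrite /bindb => hb.
  have : lambda P * sigma P * (psi P * u + mu P * Dd P) <= 0.
    by apply: mulr_ge0_le0; [exact: ltW | lra].
  lra.
rewrite ler_pdivrMr //.
have e : (u + lambda P * sigma P * mu P) * Dd P - u =
   lambda P * sigma P * (psi P * u + mu P * Dd P) by rewrite /Dd; ring.
move: hb; rewrite /bindb => /negbT; rewrite -ltNge => hb.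
have : 0 <= lambda P * sigma P * (psi P * u + mu P * Dd P).
  by apply: mulr_ge0; [exact: ltW | lra].
lra.
Qed.

Lemma binds_f {R : realType} (P : params R) u : admissible P -> binds P (fz P u) = bindb P u.
Proof.
move=> A; have D0 := Dd_pos P A; have [ls ps m _ _] := adm_pos P A.
rewrite /fz /binds /bindb /Lz; case hb: (psi P * u <= - (mu P * Dd P)).
  move: hb; rewrite /Dd => hb; apply/idP; lra.
apply/negbTE; rewrite -ltNge.
move: hb => /negbT; rewrite -ltNge => hb.
rewrite mulrA ltr_pdivlMr //; lra.
Qed.

Lemma f_strict {R : realType} (P : params R) u v : admissible P -> u < v -> fz P u < fz P v.
Proof.
move=> A uv; have D0 := Dd_pos P A; have [ls ps m _ _] := adm_pos P A.
rewrite /fz /bindb /Lz.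
case hu: (psi P * u <= - (mu P * Dd P)); case hv: (psi P * v <= - (mu P * Dd P)).
- lra.
- move: hv => /negbT; rewrite -ltNge => hv.
  rewrite ltr_pdivlMr //.
  have e : (u + lambda P * sigma P * mu P) * Dd P - u =
     lambda P * sigma P * (psi P * u + mu P * Dd P) by rewrite /Dd; ring.
  have : lambda P * sigma P * (psi P * u + mu P * Dd P) <= 0.
    by apply: mulr_ge0_le0; [exact: ltW | lra].
  lra.
- move: hu => /negbT; rewrite -ltNge => hu.
  have : psi P * u < psi P * v by rewrite ltr_pM2l.
  lra.
- by rewrite ltr_pM2r ?invr_gt0.
Qed.

Lemma hh_le {R : realType} (P : params R) e1 e2 z1 z2 y : admissible P ->
  hh P e1 e2 y <= ell P e1 e2 z1 z2 y.
Proof.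
move=> A; have /andP[q0 q1] := qbar_range P A.
rewrite /hh /ell lerD2r; apply: lerD; apply: ler_wpM2l; rewrite ?subr_ge0 //; exact: f_le.
Qed.

Lemma rate_f {R : realType} (P : params R) u : admissible P ->
  fz P u = u - lambda P * sigma P * rate P (fz P u).
Proof.
move=> A; have D0 := Dd_pos P A; have [ls ps m _ _] := adm_pos P A.
have := binds_f P u A; rewrite /rate /binds.
rewrite /fz /bindb /Lz; case hb: (psi P * u <= - (mu P * Dd P)) => hb2.
  by rewrite max_r; [ring | rewrite hb2].
rewrite max_l; last by apply: ltW; rewrite ltNge hb2.
have D0' : Dd P != 0 by rewrite gt_eqF.
by rewrite /Dd in D0' *; field.
Qed.

Lemma pi_f {R : realType} (P : params R) u pi : admissible P ->
  pi = u - lambda P * sigma P * rate P pi -> pi = fz P u.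
Proof.
move=> A; have D0 := Dd_pos P A; have [ls ps m _ _] := adm_pos P A.
rewrite /rate /fz /bindb /Lz.
case hb: (psi P * pi <= - mu P).
  rewrite max_r // => e.
  have -> : psi P * u <= - (mu P * Dd P).
    have -> : u = pi - lambda P * sigma P * mu P by rewrite e; ring.
    rewrite /Dd; nra.
  by rewrite e; ring.
move: hb => /negbT; rewrite -ltNge => hb.
rewrite max_l; last exact: ltW.
move=> e.
have eu : u = pi * Dd P.
  have : pi * Dd P = pi + lambda P * sigma P * (psi P * pi) by rewrite /Dd; ring.
  move=> ->; rewrite {1}e; ring.
have -> : (psi P * u <= - (mu P * Dd P)) = false.
  apply/negbTE; rewrite -ltNge eu.
  have : - mu P * Dd P < psi P * pi * Dd P by rewrite ltr_pM2r.
  lra.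
have D0' : Dd P != 0 by rewrite gt_eqF.
by rewrite eu mulfK.
Qed.

Lemma RPE_char {R : realType} (P : params R) e1 e2 x1 p1 x2 p2 : admissible P ->
  is_RPE P e1 e2 x1 p1 x2 p2 ->
  let y := qbar P * p2 + (1 - qbar P) * p1 in
  [/\ p1 = fz P (bv P e1 y), p2 = fz P (bv P e2 y), x1 = (p1 - beta P * y) / lambda P,
      x2 = (p2 - beta P * y) / lambda P & hh P e1 e2 y = 0].
Proof.
move=> A; have [ls ps m _ [l0 s0]] := adm_pos P A.
rewrite /is_RPE => -[E1 E2 E3 E4] /=.
set y := (qbar P * p2 + (1 - qbar P) * p1) in E1 E2 E3 E4 *.
set xb := qbar P * x2 + (1 - qbar P) * x1 in E1 E3.
have Hx : lambda P * xb = (1 - beta P) * y.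
  have G : lambda P * xb - (1 - beta P) * y =
    qbar P * ((lambda P * x2 + beta P * y) - p2) + (1 - qbar P) * ((lambda P * x1 + beta P * y) - p1).
    by rewrite /xb /y; ring.
  by apply/eqP; rewrite -subr_eq0 G -E2 -E4 !subrr !mulr0 addr0.
have H1 : p1 = bv P e1 y - lambda P * sigma P * rate P p1.
  have G : p1 - (bv P e1 y - lambda P * sigma P * rate P p1) =
    (p1 - (lambda P * x1 + beta P * y)) + lambda P * (x1 - (xb - sigma P * (rate P p1 - y) + e1))
    + (lambda P * xb - (1 - beta P) * y) by rewrite /bv /Kk; ring.
  by apply/eqP; rewrite -subr_eq0 G -E1 -E2 Hx !subrr mulr0 !addr0.
have H2 : p2 = bv P e2 y - lambda P * sigma P * rate P p2.
  have G : p2 - (bv P e2 y - lambda P * sigma P * rate P p2) =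
    (p2 - (lambda P * x2 + beta P * y)) + lambda P * (x2 - (xb - sigma P * (rate P p2 - y) + e2))
    + (lambda P * xb - (1 - beta P) * y) by rewrite /bv /Kk; ring.
  by apply/eqP; rewrite -subr_eq0 G -E3 -E4 Hx !subrr mulr0 !addr0.
have F1 := pi_f P _ _ A H1; have F2 := pi_f P _ _ A H2.
have l0' : lambda P != 0 by rewrite gt_eqF.
split => //.
- by rewrite E2; field.
- by rewrite E4; field.
rewrite /hh /ell /fz -/(fz P (bv P e1 y)) -/(fz P (bv P e2 y)) -F1 -F2 /y; ring.
Qed.

Lemma RPE_of {R : realType} (P : params R) e1 e2 y : admissible P ->
  hh P e1 e2 y = 0 ->
  is_RPE P e1 e2 ((fz P (bv P e1 y) - beta P * y) / lambda P) (fz P (bv P e1 y))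
                 ((fz P (bv P e2 y) - beta P * y) / lambda P) (fz P (bv P e2 y)).
Proof.
move=> A; have [ls ps m _ [l0 s0]] := adm_pos P A.
have l0' : lambda P != 0 by rewrite gt_eqF.
have R1 := rate_f P (bv P e1 y) A; have R2 := rate_f P (bv P e2 y) A.
rewrite /hh /ell -/(fz P (bv P e1 y)) -/(fz P (bv P e2 y)).
move: R1 R2; set p1 := fz P (bv P e1 y); set p2 := fz P (bv P e2 y) => R1 R2 H0.
have Hy : qbar P * p2 + (1 - qbar P) * p1 = y.
  by apply/eqP; rewrite -subr_eq0 H0.
have Hxb : qbar P * ((p2 - beta P * y) / lambda P) + (1 - qbar P) * ((p1 - beta P * y) / lambda P)
  = (y - beta P * y) / lambda P.
  by rewrite -Hy; field.
rewrite /is_RPE /= Hy Hxb.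
move: (rate P p1) (rate P p2) R1 R2 => r1 r2 R1 R2.
split.
- by rewrite {1}R1 /bv /Kk; field.
- by field.
- by rewrite {1}R2 /bv /Kk; field.
- by field.
Qed.

Definition Mw {R : realType} (P : params R) w := w *: A_P P + (1 - w) *: A_Z P - 1%:M.

Lemma Mw_dt {R : realType} (P : params R) w : admissible P ->
  let k := w * (lambda P * sigma P * psi P) / Dd P in
  \det (Mw P w) = k - (1 - k) * (lambda P * sigma P) /\
  \tr (Mw P w) = (1 - k) * (beta P + lambda P * sigma P) - 1 - k.
Proof.
move=> A; have D0 := Dd_pos P A.
have D0' : Dd P != 0 by rewrite gt_eqF.
rewrite /Dd in D0'.
rewrite /= det2 tr2 /Mw /A_P /A_Z !mxE /= /Dd.
split; field => //.
Qed.

Lemma Mw_stab {R : realType} (P : params R) w : admissible P -> 0 <= w <= 1 ->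
  let k := w * (lambda P * sigma P * psi P) / Dd P in
  all_eig_neg_re (Mw P w) <-> 0 < k - (1 - k) * (lambda P * sigma P).
Proof.
move=> A /andP[w0 w1] k; have [dE tE] := Mw_dt P w A.
have D0 := Dd_pos P A; have [ls ps m _ _] := adm_pos P A.
have := A; case=> [[/andP[b0 b1] _ _ _ _] _].
have k0 : 0 <= k by rewrite /k; apply: divr_ge0; [apply: mulr_ge0 => //; rewrite ltW // mulr_gt0 | exact: ltW].
have k1 : k <= 1.
  rewrite /k ler_pdivrMr // mul1r /Dd.
  have : w * (lambda P * sigma P * psi P) <= lambda P * sigma P * psi P.
    by rewrite ler_piMl // ltW // mulr_gt0.
  lra.
split.
  by move/stab_nec; rewrite dE.
move=> h; apply: stab_suff; last by rewrite dE.
rewrite tE -/k.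
have : (1 - k) * beta P <= beta P by rewrite ler_piMl //; lra.
nra.
Qed.

Lemma DT_stab {R : realType} (P : params R) z1 z2 : admissible P ->
  all_eig_neg_re (DT P (tyf z1 z2)) <-> slope P z1 z2 < 0.
Proof.
move=> A; have /andP[q0 q1] := qbar_range P A.
have D0 := Dd_pos P A; have D0' : Dd P != 0 by rewrite gt_eqF.
case: z1; case: z2 => /=.
- have -> : A_Z P - 1%:M = Mw P 0 by rewrite /Mw scale0r add0r subr0 scale1r.
  rewrite Mw_stab //= ?lexx ?ler01 //.
  have -> : slope P true true = - (0 * (lambda P * sigma P * psi P) / Dd P -
     (1 - 0 * (lambda P * sigma P * psi P) / Dd P) * (lambda P * sigma P))
     by rewrite /slope /cz /Kk; field.
  split; lra.
- rewrite -/(Mw P (qbar P)) Mw_stab ?q0 ?q1 //=.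
  have -> : slope P true false = - (qbar P * (lambda P * sigma P * psi P) / Dd P -
     (1 - qbar P * (lambda P * sigma P * psi P) / Dd P) * (lambda P * sigma P))
     by rewrite /slope /cz /Kk /Dd; rewrite /Dd in D0'; field.
  split; lra.
- have -> : (1 - qbar P) *: A_P P + qbar P *: A_Z P - 1%:M = Mw P (1 - qbar P)
    by rewrite /Mw opprB addrCA subrr addr0.
  rewrite Mw_stab //=; last by apply/andP; split; lra.
  have -> : slope P false true = - ((1 - qbar P) * (lambda P * sigma P * psi P) / Dd P -
     (1 - (1 - qbar P) * (lambda P * sigma P * psi P) / Dd P) * (lambda P * sigma P))
     by rewrite /slope /cz /Kk /Dd; rewrite /Dd in D0'; field.
  split; lra.
- have -> : A_P P - 1%:M = Mw P 1 by rewrite /Mw subrr scale0r addr0 scale1r.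
  rewrite Mw_stab //= ?lexx ?ler01 //.
  have -> : slope P false false = - (1 * (lambda P * sigma P * psi P) / Dd P -
     (1 - 1 * (lambda P * sigma P * psi P) / Dd P) * (lambda P * sigma P))
     by rewrite /slope /cz /Kk /Dd; rewrite /Dd in D0'; field.
  split; lra.
Qed.

Lemma noPZ {R : realType} (P : params R) e1 e2 y : admissible P -> 0 <= e2 ->
  hh P e1 e2 y = 0 -> bindb P (bv P e1 y) = false -> bindb P (bv P e2 y) = true ->
  slope P false true < 0 -> False.
Proof.
move=> A e20 H0 hb1 hb2 S.
have /andP[q0 q1] := qbar_range P A.
have D0 := Dd_pos P A; have [ls ps m ps1 [l0 s0]] := adm_pos P A.
have D0' : Dd P != 0 by rewrite gt_eqF.
set qb := qbar P in q0 q1 S H0.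
set K := Kk P.
have K1 : 1 < K by rewrite /K /Kk; lra.
have P1 : - mu P < psi P * fz P (bv P e1 y).
  by rewrite ltNge -/(binds P _) binds_f // hb1.
have P2 : psi P * fz P (bv P e2 y) <= - mu P.
  by rewrite -/(binds P _) binds_f // hb2.
have C : fz P (bv P e2 y) = K * y + lambda P * e2 + lambda P * sigma P * mu P.
  by rewrite /fz hb2 /Lz /bv.
have Y : y = qb * fz P (bv P e2 y) + (1 - qb) * fz P (bv P e1 y).
  apply/eqP; rewrite eq_sym -subr_eq0; apply/eqP.
  by rewrite -H0 /hh /ell hb1 hb2 /fz hb1 hb2.
move: P1 P2 C Y; set p1 := fz P _; set p2 := fz P _ => P1 P2 C Y.
have c10 : 0 < (Dd P)^-1 by rewrite invr_gt0.
move: S; rewrite /slope /cz -/K -/qb => S.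
have s1 : qb < 1.
  rewrite lt_neqAle q1 andbT; apply/eqP => e; move: S; rewrite e subrr mul0r addr0 mulr1.
  lra.
have s2 : qb * K < 1.
  have : 0 <= K * ((1 - qb) * (Dd P)^-1) by apply: mulr_ge0; [lra | apply: mulr_ge0; lra].
  nra.
have s3 : p2 < p1.
  have : psi P * p2 < psi P * p1 by lra.
  by rewrite ltr_pM2l.
have s4 : p2 <= y.
  have : 0 <= (1 - qb) * (p1 - p2) by apply: mulr_ge0; lra.
  nra.
have s5 : y <= - mu P.
  have : lambda P * sigma P * (y + mu P) <= 0.
    have : 0 <= lambda P * e2 by apply: mulr_ge0; lra.
    rewrite /K /Kk in C; nra.
  rewrite pmulr_rle0 //; lra.
have s6 : psi P * y > qb * (psi P * p2) + (1 - qb) * (- mu P).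
  have : (1 - qb) * (- mu P) < (1 - qb) * (psi P * p1) by rewrite ltr_pM2l //; lra.
  rewrite Y; nra.
have s7 : psi P * p2 >= psi P * K * y + psi P * (lambda P * sigma P * mu P).
  have : 0 <= psi P * (lambda P * e2) by apply: mulr_ge0; [lra | apply: mulr_ge0; lra].
  rewrite C; nra.
have s8 : psi P * y * (1 - qb * K) > qb * (psi P * (lambda P * sigma P * mu P)) - (1 - qb) * mu P.
  have : qb * (psi P * K * y + psi P * (lambda P * sigma P * mu P)) <= qb * (psi P * p2).
    by apply: ler_wpM2l.
  nra.
have s9 : psi P * y * (1 - qb * K) <= - mu P * psi P * (1 - qb * K).
  have : 0 < psi P * (1 - qb * K) by apply: mulr_gt0; lra.
  nra.
have : 0 < mu P * (1 - qb) * (psi P - 1) by apply: mulr_gt0; [apply: mulr_gt0|]; lra.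
rewrite /K /Kk in s8 s9; nra.
Qed.

Lemma type_tyf {R : realType} (P : params R) p1 p2 :
  type_of P p1 p2 = tyf (binds P p1) (binds P p2).
Proof. by rewrite /type_of; case: (binds P p1); case: (binds P p2). Qed.

Lemma stable_char {R : realType} (P : params R) e1 e2 x1 p1 x2 p2 : admissible P ->
  E_stable_RPE P e1 e2 x1 p1 x2 p2 ->
  let y := qbar P * p2 + (1 - qbar P) * p1 in
  [/\ p1 = fz P (bv P e1 y), p2 = fz P (bv P e2 y), x1 = (p1 - beta P * y) / lambda P,
      x2 = (p2 - beta P * y) / lambda P &
      hh P e1 e2 y = 0 /\ slope P (bindb P (bv P e1 y)) (bindb P (bv P e2 y)) < 0].
Proof.
move=> A [H St] /=.
have [F1 F2 X1 X2 H0] := RPE_char P _ _ _ _ _ _ A H.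
split => //; split => //.
move: St; rewrite type_tyf.
set y := (qbar P * p2 + (1 - qbar P) * p1) in F1 F2 *.
have B1 : binds P p1 = bindb P (bv P e1 y) by rewrite [X in binds P X]F1 binds_f.
have B2 : binds P p2 = bindb P (bv P e2 y) by rewrite [X in binds P X]F2 binds_f.
rewrite B1 B2.
by move/(DT_stab _ _ _ A).
Qed.

Lemma unique_y {R : realType} (P : params R) e1 e2 y y' : admissible P ->
  hh P e1 e2 y = 0 -> slope P (bindb P (bv P e1 y)) (bindb P (bv P e2 y)) < 0 ->
  hh P e1 e2 y' = 0 -> slope P (bindb P (bv P e1 y')) (bindb P (bv P e2 y')) < 0 ->
  y = y'.
Proof.
move=> A.
suff W : forall a b, hh P e1 e2 a = 0 ->
   slope P (bindb P (bv P e1 a)) (bindb P (bv P e2 a)) < 0 ->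
   hh P e1 e2 b = 0 -> a < b -> False.
  move=> h1 s1 h2 s2; case: (ltgtP y y') => // c.
    by case: (W _ _ h1 s1 h2 c).
  by case: (W _ _ h2 s2 h1 c).
move=> a b ha sa hb ab.
have := hh_le P e1 e2 (bindb P (bv P e1 a)) (bindb P (bv P e2 a)) b A.
rewrite (ell_lin P _ _ _ _ a) // -/(hh P e1 e2 a) ha hb add0r.
have : 0 < b - a by lra.
nra.
Qed.

Lemma slope_ff {R : realType} (P : params R) : admissible P -> slope P false false < 0.
Proof.
move=> A; have D0 := Dd_pos P A; have [ls ps m ps1 [l0 s0]] := adm_pos P A.
have D0' : Dd P != 0 by rewrite gt_eqF.
have -> : slope P false false = (Kk P - Dd P) / Dd P by rewrite /slope /cz; field.
rewrite pmulr_llt0 ?invr_gt0 // /Kk /Dd.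
have : lambda P * sigma P * 1 < lambda P * sigma P * psi P by rewrite ltr_pM2l.
lra.
Qed.

Lemma min_cases {R : realType} (a b : R) : Num.min a b = a \/ Num.min a b = b.
Proof. by case: (leP a b) => h; [left | right]. Qed.

Lemma exists_y {R : realType} (P : params R) e1 e2 z : admissible P ->
  0 < hh P e1 e2 z ->
  exists y, hh P e1 e2 y = 0 /\ slope P (bindb P (bv P e1 y)) (bindb P (bv P e2 y)) < 0.
Proof.
move=> A hz.
pose rt z1 z2 := z - ell P e1 e2 z1 z2 z / slope P z1 z2.
pose r' z1 z2 := if slope P z1 z2 < 0 then rt z1 z2 else rt false false.
pose ys := Num.min (Num.min (r' false false) (r' true false))
                   (Num.min (r' false true) (r' true true)).
have sff := slope_ff P A.
have ellz : forall z1 z2, 0 < ell P e1 e2 z1 z2 z.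
  by move=> z1 z2; apply: lt_le_trans hz (hh_le _ _ _ _ _ _ A).
have rtz : forall z1 z2, slope P z1 z2 < 0 -> z < rt z1 z2.
  move=> z1 z2 s.
  have : ell P e1 e2 z1 z2 z / slope P z1 z2 < 0 by rewrite pmulr_rlt0 ?invr_lt0 // ellz.
  rewrite /rt; lra.
have ellrt : forall z1 z2, slope P z1 z2 < 0 -> ell P e1 e2 z1 z2 (rt z1 z2) = 0.
  move=> z1 z2 s; rewrite (ell_lin P _ _ _ _ z) // /rt.
  have s0 : slope P z1 z2 != 0 by rewrite lt_eqF.
  by field.
have FA : forall z1 z2, slope P z1 z2 < 0 -> ys <= rt z1 z2.
  move=> z1 z2 s.
  have : ys <= r' z1 z2.
    by rewrite /ys; case: z1 s; case: z2 => s; rewrite !ge_min lexx ?orbT.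
  by rewrite /r' s.
have FB : exists z1 z2, slope P z1 z2 < 0 /\ ys = rt z1 z2.
  suff [z1 [z2 ->]] : exists z1 z2, ys = r' z1 z2.
    rewrite /r'; case: ifP => s.
      by exists z1, z2.
    by exists false, false.
  rewrite /ys.
  case: (min_cases (Num.min (r' false false) (r' true false)) (Num.min (r' false true) (r' true true))) => ->.
    case: (min_cases (r' false false) (r' true false)) => ->; by do 2 eexists.
  case: (min_cases (r' false true) (r' true true)) => ->; by do 2 eexists.
have [z1 [z2 [s0 ye]]] := FB.
have zys : z < ys by rewrite ye; apply: rtz.
have nonneg : forall w1 w2, 0 <= ell P e1 e2 w1 w2 ys /\
   (0 <= slope P w1 w2 -> 0 < ell P e1 e2 w1 w2 ys).
  move=> w1 w2; case: (ltP (slope P w1 w2) 0) => sw.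
    split; last by move=> hs; lra.
    rewrite (ell_lin P _ _ _ _ (rt w1 w2)) // ellrt // add0r.
    have : ys - rt w1 w2 <= 0 by rewrite subr_le0; apply: FA.
    nra.
  have E : 0 < ell P e1 e2 w1 w2 ys.
    rewrite (ell_lin P _ _ _ _ z) //.
    have := ellz w1 w2; have : 0 < ys - z by lra.
    nra.
  by split; [exact: ltW | move=> _].
exists ys.
have h0 : hh P e1 e2 ys = 0.
  apply/eqP; rewrite eq_le; apply/andP; split.
    have E0 : ell P e1 e2 z1 z2 ys = 0 by rewrite ye ellrt.
    by have := hh_le P e1 e2 z1 z2 ys A; rewrite E0.
  by have [] := nonneg (bindb P (bv P e1 ys)) (bindb P (bv P e2 ys)).
split => //.
rewrite ltNge; apply/negP => sl.
have [_ h] := nonneg (bindb P (bv P e1 ys)) (bindb P (bv P e2 ys)).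
have := h sl; rewrite -/(hh P e1 e2 ys) h0; lra.
Qed.

Lemma hh_fz {R : realType} (P : params R) e1 e2 y :
  hh P e1 e2 y = qbar P * fz P (bv P e2 y) + (1 - qbar P) * fz P (bv P e1 y) - y.
Proof. by []. Qed.

Theorem proposition8 (R : realType) (P : params R) (eps2 : R)
  (eps_bar : option R) :
  admissible P -> 0 <= eps2 ->
  (forall eps1 : R,
     (exists x1 pi1 x2 pi2, is_RPE P eps1 eps2 x1 pi1 x2 pi2) <->
     ge_thr eps_bar eps1) ->
  forall eps1 : R, gt_thr eps_bar eps1 ->
    exists x1 pi1 x2 pi2,
      [/\ E_stable_RPE P eps1 eps2 x1 pi1 x2 pi2,
          (forall y1 rho1 y2 rho2, E_stable_RPE P eps1 eps2 y1 rho1 y2 rho2 ->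
             [/\ y1 = x1, rho1 = pi1, y2 = x2 & rho2 = pi2]) &
          type_of P pi1 pi2 = PP \/ type_of P pi1 pi2 = ZP].
Proof.
move=> A e20 Hthr e1 gt.
have /andP[q0 q1] := qbar_range P A.
have D0 := Dd_pos P A; have [ls ps m ps1 [l0 s0]] := adm_pos P A.
have D0' : Dd P != 0 by rewrite gt_eqF.
have [z hz] : exists z, 0 < hh P e1 eps2 z.
  have [qe|qn] := eqVneq (qbar P) 1.
    exists (- mu P / 2); rewrite hh_fz qe subrr mul0r addr0 mul1r.
    rewrite /fz /Lz /bv /Kk; case: ifP => _.
      have : 0 <= lambda P * eps2 by apply: mulr_ge0; lra.
      nra.
    rewrite ltrBrDl addr0 ltr_pdivlMr // /Dd.
    have : 0 <= lambda P * eps2 by apply: mulr_ge0; lra.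
    have : 0 < lambda P * sigma P * (psi P - 1) * (mu P / 2).
      by apply: mulr_gt0; [apply: mulr_gt0 => //; lra | lra].
    nra.
  have qlt : qbar P < 1 by rewrite lt_neqAle qn q1.
  pose e' := if eps_bar is Some t then (t + e1) / 2 else e1 - 1.
  have [ge' lt'] : ge_thr eps_bar e' /\ e' < e1.
    rewrite /e'; clear -gt; destruct eps_bar as [t|]; simpl in *; split => //; lra.
  have [x1 [p1 [x2 [p2 H]]]] := (Hthr e').2 ge'.
  have [_ _ _ _ H0] := RPE_char P _ _ _ _ _ _ A H.
  set y := qbar P * p2 + (1 - qbar P) * p1 in H0.
  exists y.
  have : fz P (bv P e' y) < fz P (bv P e1 y).
    apply: f_strict => //; rewrite /bv ltrD2l ltr_pM2l //.
  move: H0; rewrite !hh_fz => H0 hf.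
  have : 0 < (1 - qbar P) * (fz P (bv P e1 y) - fz P (bv P e' y)).
    by apply: mulr_gt0; lra.
  nra.
have [y [h0 sl]] := exists_y P e1 eps2 z A hz.
have RP := RPE_of P e1 eps2 y A h0.
set p1 := fz P (bv P e1 y) in RP *; set p2 := fz P (bv P eps2 y) in RP *.
have B1 : binds P p1 = bindb P (bv P e1 y) by rewrite binds_f.
have B2 : binds P p2 = bindb P (bv P eps2 y) by rewrite binds_f.
exists ((p1 - beta P * y) / lambda P), p1, ((p2 - beta P * y) / lambda P), p2.
split.
- split => //; rewrite type_tyf B1 B2; exact/DT_stab.
- move=> y1 rho1 y2 rho2 St.
  have [F1 F2 X1 X2 [H0' S']] := stable_char P _ _ _ _ _ _ A St.
  set y' := qbar P * rho2 + (1 - qbar P) * rho1 in F1 F2 X1 X2 H0' S'.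
  have ey : y' = y by apply: (unique_y P e1 eps2 y' y A).
  rewrite ey in F1 F2 X1 X2.
  have e1' : rho1 = p1 by rewrite F1.
  have e2' : rho2 = p2 by rewrite F2.
  by split => //; [rewrite X1 e1' | rewrite X2 e2'].
- rewrite type_tyf B1 B2.
  move: sl.
  case b1: (bindb P (bv P e1 y)); case b2: (bindb P (bv P eps2 y)) => /= sl.
  - exfalso; move: sl; rewrite /slope /cz /Kk; lra.
  - by right.
  - by case: (noPZ P e1 eps2 y A e20 h0 b1 b2 sl).
  - by left.
Qed.
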